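(* Given $\lambda\ge1$, $\varepsilon>0$ and a positive integer $k$, there is an integer $n$ such that every $\lambda$-triangular sequence (in any Banach space) of length at least $n$ has a $\big(\frac{\lambda^2+1}{2}+\varepsilon\big)$-wide-$(s)$ subsequence of length $k$.
   Context: Given $\lambda\ge1$, a finite or infinite sequence $(b_j)$ in a Banach space $X$ is $\lambda$-triangular if there is a sequence $(f_j)$ in $X^*$ (of the same length) with $f_i(b_j)=1$ for all $j\ge i$, $f_i(b_j)=0$ for all $j<i$, and $\|f_j\|\le\lambda$, $\|b_j\|\le\lambda$ for all $j$. A sequence $(b_j)$ is $\mu$-basic if $\|\sum_{j=1}^k c_jb_j\|\le\mu\|\sum_j c_jb_j\|$ for all $k$ and scalars $(c_j)$. For $\lambda\ge1$, a finite or infinite sequence $(b_j)$ is $\lambda$-wide-$(s)$ if (a) it is $2\lambda$-basic; (b) $\|b_j\|\le\lambda$ for all $j$; (c) $|\sum_{j=k}^n c_j|\le\lambda\|\sum_{j=1}^n c_jb_j\|$ for all $1\le k\le n\le$ length and scalars $c_1,\dots,c_n$. *)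

(* Defs.v *)
From HB Require Import structures.
From mathcomp Require Import all_boot all_order all_algebra.
From mathcomp Require Import all_classical all_reals all_analysis.
Set Implicit Arguments. Unset Strict Implicit. Unset Printing Implicit Defensive.
Import Order.TTheory GRing.Theory Num.Theory.
Import numFieldNormedType.Exports.
Local Open Scope ring_scope.

(* Finite sequences of length m are encoded as b : nat -> X, indexed 0..m-1. *)

Definition bounded_functional {R : realType} {X : normedModType R}
  (lam : R) (f : X -> R) : Prop :=
  (forall (a : R) (x y : X), f (a *: x + y) = a * f x + f y) /\
  (forall x : X, `|f x| <= lam * `|x|).

Definition triangular {R : realType} {X : normedModType R}
  (lam : R) (m : nat) (b : nat -> X) : Prop :=
  exists f : nat -> X -> R,
    (forall i j, (i < m)%N -> (j < m)%N -> (i <= j)%N -> f i (b j) = 1) /\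
    (forall i j, (i < m)%N -> (j < m)%N -> (j < i)%N -> f i (b j) = 0) /\
    (forall i, (i < m)%N -> bounded_functional lam (f i)) /\
    (forall j, (j < m)%N -> `|b j| <= lam).

Definition basic {R : realType} {X : normedModType R}
  (mu : R) (m : nat) (b : nat -> X) : Prop :=
  forall (k : nat) (c : nat -> R), (k <= m)%N ->
    `|\sum_(j < k) c j *: b j| <= mu * `|\sum_(j < m) c j *: b j|.

Definition wide_s {R : realType} {X : normedModType R}
  (lam : R) (m : nat) (b : nat -> X) : Prop :=
  basic (2 * lam) m b /\
  (forall j, (j < m)%N -> `|b j| <= lam) /\
  (forall (k n : nat) (c : nat -> R), (k <= n)%N -> (n <= m)%N ->
     `|\sum_(k <= j < n) c j| <= lam * `|\sum_(j < n) c j *: b j|).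

Definition subseq_index (k m : nat) (phi : nat -> nat) : Prop :=
  (forall i, (i < k)%N -> (phi i < m)%N) /\
  (forall i j, (i < j)%N -> (j < k)%N -> (phi i < phi j)%N).

(* Main.v *)
Require Import Defs.
From HB Require Import structures.
From mathcomp Require Import all_boot all_order all_algebra.
From mathcomp Require Import all_classical all_reals all_analysis.
From mathcomp Require Import zify ring lra.
Set Implicit Arguments. Unset Strict Implicit. Unset Printing Implicit Defensive.
Import Order.TTheory GRing.Theory Num.Theory.
Import numFieldNormedType.Exports.
Local Open Scope classical_set_scope.
Local Open Scope ring_scope.

Local Open Scope nat_scope.
Definition homog (chi : seq nat -> nat) (k : nat) (H : seq nat) (c : nat) : Prop :=
  forall T, subseq T H -> size T = k -> chi T = c.

Fixpoint good (chi : seq nat -> nat) (k : nat) (ps : seq (nat * nat)) : Prop :=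
  match ps with
  | [::] => True
  | p :: ps' => (forall T, subseq T (map fst ps') -> size T = k -> chi (p.1 :: T) = p.2)
                /\ good chi k ps'
  end.

Lemma good_subseq chi k ps qs : subseq qs ps -> good chi k ps -> good chi k qs.
Proof.
elim: ps qs => [|p ps IH] [|q qs] //=.
case: eqP => [<-|_] Hs [Hp Hg].
  split; last exact: (IH qs Hs Hg).
  move=> T HT; apply: Hp; apply: subseq_trans HT _; exact: map_subseq.
exact: (IH (q :: qs) Hs Hg).
Qed.

Lemma good_homog chi k ps c : good chi k ps -> all (fun p => p.2 == c) ps ->
  homog chi k.+1 (map fst ps) c.
Proof.
elim: ps => [|p ps IH] /=.
  by move=> _ _ [|t T] //= /eqP.
move=> [Hp Hg] /andP[/eqP Hc Ha] [|t T] //= Hs [Hsz].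
move: Hs; case: eqP => [->|_] Hs.
  by rewrite Hp.
by apply: (IH Hg Ha (t :: T) Hs); rewrite /= Hsz.
Qed.

Lemma pigeon C M (s : seq nat) : all (fun x => x < C.+1) s -> C.+1 * M <= size s ->
  exists2 c, c < C.+1 & M <= count (pred1 c) s.
Proof.
elim: C s => [|C IH] s Hall Hsz.
  exists 0 => //.
  rewrite (eq_in_count (a2 := predT)); first by rewrite count_predT -[M]mul1n.
  by move=> x Hx /=; move/allP: Hall => /(_ x Hx); rewrite ltnS leqn0.
case: (leqP M (count (pred1 C.+1) s)) => Hc.
  by exists C.+1.
have Hcs := count_predC (pred1 C.+1) s.
have H1 : all (fun x => x < C.+1) (seq.filter (predC (pred1 C.+1)) s).
  rewrite all_filter; apply/allP => x Hx /=; apply/implyP => Hne.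
  by move/allP: Hall => /(_ x Hx); rewrite ltnS leq_eqVlt (negPf Hne).
have H2 : C.+1 * M <= size (seq.filter (predC (pred1 C.+1)) s).
  rewrite size_filter; rewrite !mulSn in Hsz *; move: Hsz Hc; rewrite -Hcs; set u := count _ _; set v := count _ _; lia.
have [c Hc1 Hc2] := IH _ H1 H2.
exists c; first by lia.
apply: (leq_trans Hc2); rewrite count_filter.
by apply: sub_count => x /andP[].
Qed.

Lemma build k C
  (IH : forall M, exists N, forall chi : seq nat -> nat, (forall T, chi T < C) ->
        forall S : seq nat, N <= size S ->
        exists H, subseq H S /\ size H = M /\ exists c, c < C /\ homog chi k H c) :
  forall L, exists N, forall chi : seq nat -> nat, (forall T, chi T < C) ->
    forall S : seq nat, N <= size S ->
    exists ps, subseq (map fst ps) S /\ size ps = L /\ good chi k ps /\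
               all (fun p => p.2 < C) ps.
Proof.
elim=> [|L [NL HL]].
  by exists 0; move=> chi _ S _; exists [::]; rewrite sub0seq.
have [N1 H1] := IH NL.
exists N1.+1; move=> chi Hb [|a S] //= HS.
have [H' [HsH' [HszH' [c0 [Hc0 Hhom]]]]] := H1 (fun T => chi (a :: T)) (fun T => Hb _) S HS.
have [ps [Hps1 [Hps2 [Hps3 Hps4]]]] := HL chi Hb H' (eq_leq (esym HszH')).
exists ((a, c0) :: ps) => /=; rewrite eqxx; split; first exact: subseq_trans Hps1 HsH'.
split; first by rewrite Hps2.
split; last by rewrite Hc0.
split=> // T HT Hsz; apply: Hhom => //; exact: subseq_trans HT Hps1.
Qed.

Lemma ramsey k : forall C M, exists N, forall chi : seq nat -> nat, (forall T, chi T < C) ->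
  forall S : seq nat, N <= size S ->
  exists H, subseq H S /\ size H = M /\ exists c, c < C /\ homog chi k H c.
Proof.
elim: k => [|k IHk] C M.
  exists M; move=> chi Hb S HS; exists (take M S); split; first exact: take_subseq.
  split; first by rewrite size_takel.
  exists (chi [::]); split=> // T _ /size0nil -> //.
have [N HN] := build (IHk C) (C * M).
exists N; move=> chi Hb S HS.
have [ps [Hps1 [Hps2 [Hps3 Hps4]]]] := HN chi Hb S HS.
case: C Hb HN Hps2 Hps4 => [|C] Hb HN Hps2 Hps4.
  by have := Hb [::].
have Ha1 : all (fun x => x < C.+1) (map snd ps) by rewrite all_map.
have Ha2 : C.+1 * M <= size (map snd ps) by rewrite size_map Hps2.
have [c Hc1 Hc2] := @pigeon C M (map snd ps) Ha1 Ha2.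
  set qs := take M (seq.filter (fun p => p.2 == c) ps).
  have Hq : subseq qs ps.
    apply: subseq_trans (take_subseq _ _) (filter_subseq _ _).
  exists (map fst qs); split; first exact: subseq_trans (map_subseq _ Hq) Hps1.
  split.
    rewrite size_map size_takel // size_filter.
    by rewrite count_map in Hc2.
  exists c; split=> //.
  apply: good_homog; first exact: good_subseq Hq Hps3.
  rewrite /qs; apply/allP => p /mem_take; by rewrite mem_filter => /andP[].
Qed.

Local Open Scope ring_scope.
Lemma hb_step (R : realType) (X : normedModType R) (v : nat -> X) (p : nat) (g : nat -> R) :
 (forall a : nat -> R, \sum_(i < p) a i * g i <= `|\sum_(i < p) a i *: v i|) ->
 exists t, forall a : nat -> R,
   \sum_(i < p) a i * g i + a p * t <= `|\sum_(i < p) a i *: v i + a p *: v p|.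
Proof.
move=> Hg.
pose F := fun a : nat -> R => \sum_(i < p) a i * g i.
pose V := fun a : nat -> R => \sum_(i < p) a i *: v i.
have FD : forall a w, F (fun i => a i + w i) = F a + F w.
  by move=> a w; rewrite /F -big_split; apply: eq_bigr => i _; rewrite mulrDl.
have VD : forall a w, V (fun i => a i + w i) = V a + V w.
  by move=> a w; rewrite /V -big_split; apply: eq_bigr => i _; rewrite scalerDl.
have FZ : forall s a, F (fun i => s * a i) = s * F a.
  by move=> s a; rewrite /F mulr_sumr; apply: eq_bigr => i _; rewrite mulrA.
have VZ : forall s a, V (fun i => s * a i) = s *: V a.
  by move=> s a; rewrite /V scaler_sumr; apply: eq_bigr => i _; rewrite scalerA.
have key : forall a w, F a - `|V a - v p| <= `|V w + v p| - F w.
  move=> a w.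
  have h1 : F (fun i => a i + w i) <= `|V (fun i => a i + w i)| := Hg _.
  rewrite FD VD in h1.
  have h2 : `|V a + V w| <= `|V a - v p| + `|V w + v p|.
    have -> : V a + V w = (V a - v p) + (V w + v p) by rewrite addrACA addNr addr0.
    exact: ler_normD.
  lra.
pose A : set R := fun x => exists a, x = F a - `|V a - v p|.
have An : A !=set0 by exists (F (fun=> 0) - `|V (fun=> 0) - v p|); exists (fun=> 0).
have Aub : forall w, ubound A (`|V w + v p| - F w).
  by move=> w x [a ->]; exact: key.
have Asup : has_sup A by split => //; exists (`|V (fun=> 0) + v p| - F (fun=> 0)); exact: Aub.
exists (sup A) => a.
have Ht1 : forall a, F a - `|V a - v p| <= sup A.
  by move=> a'; apply: sup_upper_bound => //; exists a'.
have Ht2 : forall w, sup A <= `|V w + v p| - F w.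
  by move=> w; apply: ge_sup => //; exact: Aub.
have Hga : F a <= `|V a| := Hg a.
change (F a + a p * sup A <= `|V a + a p *: v p|).
case: (ltgtP (a p) 0) => hap.
- pose be := - a p.
  have hbe : 0 < be by rewrite /be oppr_gt0.
  have := Ht1 (fun i => be^-1 * a i).
  rewrite FZ VZ => h.
  have h' := ler_wpM2l (ltW hbe) h.
  have E1 : be * (be^-1 * F a - `|be^-1 *: V a - v p|) = F a - `|V a + a p *: v p|.
    rewrite mulrBr mulrA mulfV ?gt_eqF // mul1r.
    congr (_ - _).
    have -> : V a + a p *: v p = be *: (be^-1 *: V a - v p).
      by rewrite scalerBr scalerA mulfV ?gt_eqF // scale1r /be scaleNr opprK.
    by rewrite normrZ gtr0_norm.
  rewrite E1 in h'.
  have : be * sup A = - (a p * sup A) by rewrite /be mulNr.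
  lra.
- have := Ht2 (fun i => (a p)^-1 * a i).
  rewrite FZ VZ => h.
  have h' := ler_wpM2l (ltW hap) h.
  have E1 : a p * (`|(a p)^-1 *: V a + v p| - (a p)^-1 * F a) = `|V a + a p *: v p| - F a.
    rewrite mulrBr mulrA mulfV ?gt_eqF // mul1r.
    congr (_ - _).
    have -> : V a + a p *: v p = a p *: ((a p)^-1 *: V a + v p).
      by rewrite scalerDr scalerA mulfV ?gt_eqF // scale1r.
    by rewrite normrZ gtr0_norm.
  rewrite E1 in h'.
  lra.
- by rewrite hap mul0r scale0r !addr0.
Qed.

Lemma hb_fin (R : realType) (X : normedModType R) (v : nat -> X) (p : nat) : (0 < p)%N ->
  exists g : nat -> R, g 0%N = `|v 0%N| /\
   forall a : nat -> R, \sum_(i < p) a i * g i <= `|\sum_(i < p) a i *: v i|.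
Proof.
case: p => // p _; elim: p => [|p [g [g0 Hg]]].
  exists (fun=> `|v 0%N|); split => // a.
  rewrite !big_ord1 normrZ; apply: ler_wpM2r => //; exact: ler_norm.
have [t Ht] := hb_step Hg.
exists (fun i => if i == p.+1 then t else g i); split => //= a.
rewrite [in X in X <= _]big_ord_recr [in X in _ <= X]big_ord_recr /= eqxx.
rewrite (eq_bigr (fun i : 'I_p.+1 => a i * g i)); first exact: Ht.
by move=> i _; rewrite ltn_eqF.
Qed.

Lemma bf0 (R : realType) (X : normedModType R) lam (f : X -> R) :
  bounded_functional lam f -> f 0 = 0.
Proof.
move=> [Hl _]; have := Hl 1 0 0; rewrite scale1r addr0 mul1r => h.
lra.
Qed.

Lemma bf_sum (R : realType) (X : normedModType R) lam (f : X -> R) n (c : nat -> R) (w : nat -> X) :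
  bounded_functional lam f ->
  f (\sum_(j < n) c j *: w j) = \sum_(j < n) c j * f (w j).
Proof.
move=> Hf; elim: n => [|n IH]; first by rewrite !big_ord0 (bf0 Hf).
rewrite !big_ord_recr /= -IH addrC (proj1 Hf) addrC //.
Qed.

Lemma sum_pick (V : zmodType) p (i0 : nat) (F : nat -> V) : (i0 < p)%N ->
  \sum_(i < p) (if (i : nat) == i0 then F i else 0) = F i0.
Proof.
move=> Hi; rewrite (bigD1 (Ordinal Hi)) //= eqxx big1 ?addr0 // => i Hne.
case: eqP => // Heq; exfalso; move/eqP: Hne; apply; exact: val_inj.
Qed.

Lemma norm_sum_le (R : realType) (X : normedModType R) n (c : nat -> R) (w : nat -> X) (B : nat -> R) :
  (forall j, (j < n)%N -> `|c j| * `|w j| <= B j) ->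
  `|\sum_(j < n) c j *: w j| <= \sum_(j < n) B j.
Proof.
move=> H; apply: le_trans (ler_norm_sum _ _ _) _.
apply: ler_sum => j _; rewrite normrZ; exact: H.
Qed.

Lemma tail_sum (R : realType) (X : normedModType R) lam m (b : nat -> X) (f : nat -> X -> R)
  (phi : nat -> nat) n (c : nat -> R) i :
  (forall i j, (i < m)%N -> (j < m)%N -> (i <= j)%N -> f i (b j) = 1) ->
  (forall i j, (i < m)%N -> (j < m)%N -> (j < i)%N -> f i (b j) = 0) ->
  (forall i, (i < m)%N -> bounded_functional lam (f i)) ->
  (forall i, (i < n)%N -> (phi i < m)%N) ->
  (forall i j, (i < j)%N -> (j < n)%N -> (phi i < phi j)%N) ->
  (i < n)%N ->
  f (phi i) (\sum_(j < n) c j *: b (phi j)) = \sum_(i <= j < n) c j.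
Proof.
move=> H1 H0 Hf Hm Hinc Hi.
rewrite (bf_sum n c (fun j => b (phi j)) (Hf _ (Hm _ Hi))) big_geq_mkord [X in _ = X]big_mkcond /=.
apply: eq_bigr => j _.
case: (leqP i j) => hij.
  rewrite H1 ?mulr1 //; try exact: Hm.
  by move: hij; rewrite leq_eqVlt => /orP[/eqP ->//|h]; apply: ltnW; apply: Hinc.
rewrite H0 ?mulr0 //; try exact: Hm; by apply: Hinc.
Qed.

Lemma sum_pick_mul (R : realType) p (i0 : nat) (s : R) (F : nat -> R) : (i0 < p)%N ->
  \sum_(i < p) (if (i : nat) == i0 then s else 0) * F i = s * F i0.
Proof.
move=> Hi; rewrite -(sum_pick (fun i => s * F i) Hi); apply: eq_bigr => i _.
by case: eqP => _; rewrite ?mul0r.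
Qed.

Lemma sum_pick_scale (R : realType) (X : normedModType R) p (i0 : nat) (s : R) (F : nat -> X) :
  (i0 < p)%N ->
  \sum_(i < p) (if (i : nat) == i0 then s else 0) *: F i = s *: F i0.
Proof.
move=> Hi; rewrite -(sum_pick (fun i => s *: F i) Hi); apply: eq_bigr => i _.
by case: eqP => _; rewrite ?scale0r.
Qed.

Lemma truncn_close (R : realType) (u v dd : R) : 0 < dd -> 0 <= u -> 0 <= v ->
  Num.truncn (u / dd) = Num.truncn (v / dd) -> `|u - v| < dd.
Proof.
move=> hd hu hv he.
have hu' : 0 <= u / dd by apply: divr_ge0 => //; exact: ltW.
have hv' : 0 <= v / dd by apply: divr_ge0 => //; exact: ltW.
have /andP[a1 a2] := truncn_itv hu'.
have /andP[b1 b2] := truncn_itv hv'.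
rewrite he in a1 a2; rewrite -natr1 in a2 b2.
have eu : u = u / dd * dd by rewrite divfK ?gt_eqF.
have ev : v = v / dd * dd by rewrite divfK ?gt_eqF.
have h1 : u / dd - v / dd < 1 by lra.
have h2 : v / dd - u / dd < 1 by lra.
have : u - v = (u / dd - v / dd) * dd by rewrite mulrBl -eu -ev.
move=> ->; rewrite normrM (gtr0_norm hd) -[X in _ < X]mul1r ltr_pM2r //.
by rewrite ltr_norml; apply/andP; split; lra.
Qed.

Lemma core (R : realType) (X : normedModType R) (lam eps et dn : R) (k m : nat)
  (b : nat -> X) (f : nat -> X -> R) (H : seq nat) :
  1 <= lam -> 0 < eps -> (0 < k)%N ->
  et = eps / (4 * k%:R * lam) -> dn = eps / 2 ->
  (forall i j, (i < m)%N -> (j < m)%N -> (i <= j)%N -> f i (b j) = 1) ->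
  (forall i j, (i < m)%N -> (j < m)%N -> (j < i)%N -> f i (b j) = 0) ->
  (forall i, (i < m)%N -> bounded_functional lam (f i)) ->
  (forall j, (j < m)%N -> `|b j| <= lam) ->
  subseq H (iota 0 m) -> size H = (k + (Num.truncn (2 * lam / et)).+1 * k)%N ->
  (forall (z : {ffun 'I_k -> 'I_(Num.truncn (4 * lam / et)).+1}) T T',
     subseq T H -> size T = k -> subseq T' H -> size T' = k ->
     Num.truncn (`|\sum_(j < k) (- (2 * lam) + (z j)%:R * et) *: b (nth 0%N T j)| / dn) =
     Num.truncn (`|\sum_(j < k) (- (2 * lam) + (z j)%:R * et) *: b (nth 0%N T' j)| / dn)) ->
  forall (d : nat -> R) (r : nat), (r <= k)%N ->
  `|\sum_(j < k) d j *: b (nth 0%N H j)| <= 1 ->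
  `|\sum_(j < r) d j *: b (nth 0%N H j)| <= lam ^+ 2 + 1 + 2 * eps.
Proof.
move=> Hl He Hk Het Hdn H1 H0 Hf Hb HH HsH Hhom d r Hr Hx.
have lam0 : 0 < lam by apply: lt_le_trans Hl.
have k0 : 0 < k%:R :> R by rewrite ltr0n.
have et0 : 0 < et by rewrite Het; apply: divr_gt0 => //; apply: mulr_gt0 => //; apply: mulr_gt0.
have Het2 : 2 * k%:R * et * lam = eps / 2.
  by rewrite Het; field; apply/andP; split; rewrite gt_eqF.
have Hsort : sorted ltn H := subseq_sorted ltn_trans HH (iota_ltn_sorted 0 m).
pose phi := fun j => nth 0%N H j.
have HinH : forall j, (j < size H)%N -> phi j \in H by move=> j Hj; exact: mem_nth.
have Hmem : forall h, h \in H -> (h < m)%N.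
  by move=> h Hh; have := mem_subseq HH Hh; rewrite mem_iota.
have Hphim : forall j, (j < k)%N -> (phi j < m)%N.
  by move=> j Hj; apply: Hmem; apply: HinH; rewrite HsH; clear -Hj; lia.
have Hinc : forall i j, (i < j)%N -> (j < k)%N -> (phi i < phi j)%N.
  move=> i j hij hj; apply: (sorted_ltn_nth ltn_trans 0%N Hsort) => //; rewrite inE HsH; clear -hij hj; lia.
have Htail : forall i, (i < k)%N -> `|\sum_(i <= j < k) d j| <= lam.
  move=> i Hi; rewrite -(tail_sum d H1 H0 Hf Hphim Hinc Hi).
  apply: le_trans (proj2 (Hf _ (Hphim _ Hi)) _) _.
  by rewrite -[X in _ <= X]mulr1; apply: ler_wpM2l => //; exact: ltW.
have Hd : forall j, (j < k)%N -> `|d j| <= 2 * lam.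
  move=> j Hj; have := Htail j Hj; rewrite big_ltn //.
  case: (ltnP j.+1 k) => h h1.
    have h2 := Htail _ h.
    have : d j = (d j + \sum_(j.+1 <= i < k) d i) - \sum_(j.+1 <= i < k) d i by rewrite addrK.
    move=> ->; apply: le_trans (ler_normB _ _) _; lra.
  by move: h1; rewrite big_geq // addr0; lra.
case: (ltnP r k) => Hrk; last first.
  have -> : r = k by apply/eqP; rewrite eqn_leq Hr Hrk.
  have : 0 <= lam ^+ 2 by rewrite exprn_ge0 // ltW.
  lra.
pose y := \sum_(j < r) d j *: b (phi j).
pose M := ((Num.truncn (2 * lam / et)).+1 * k)%N.
pose R' := drop k H.
have HsR : size R' = M by rewrite /R' size_drop HsH addKn.
have HR'H : forall h, h \in R' -> h \in H by move=> h /mem_drop.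
pose v := fun i => if i is i'.+1 then b (nth 0%N R' i') else y.
have [g [g0 Hg]] := hb_fin v (ltn0Sn M).
have Hgb : forall i, (i < M)%N -> `|g i.+1| <= lam.
  move=> i Hi.
  have Hbi : `|b (nth 0%N R' i)| <= lam.
    by apply: Hb; apply: Hmem; apply: HR'H; apply: mem_nth; rewrite HsR.
  have e1 := Hg (fun l => if l == i.+1 then 1 else 0).
  have e2 := Hg (fun l => if l == i.+1 then -1 else 0).
  rewrite sum_pick_mul // sum_pick_scale // scale1r mul1r in e1.
  rewrite sum_pick_mul // sum_pick_scale // scaleN1r normrN mulN1r in e2.
  rewrite ler_norml; apply/andP; split; lra.
pose val := fun h => g (index h R').+1.
have Hval : forall h, h \in R' -> `|val h| <= lam.
  by move=> h Hh; apply: Hgb; rewrite -HsR index_mem.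
pose bin := fun h => Num.truncn ((val h + lam) / et).
have Hbin : forall h, h \in R' -> (bin h < (Num.truncn (2 * lam / et)).+1)%N.
  move=> h Hh; rewrite ltnS; apply: le_truncn.
  apply: ler_wpM2r; first by rewrite invr_ge0 ltW.
  by have := Hval h Hh; rewrite ler_norml => /andP[]; lra.
have Hall : all (fun x => (x < (Num.truncn (2 * lam / et)).+1)%N) (map bin R').
  by rewrite all_map; apply/allP => h Hh; exact: Hbin.
have Hszb : ((Num.truncn (2 * lam / et)).+1 * k <= size (map bin R'))%N.
  by rewrite size_map HsR.
have [c _ Hc2] := pigeon Hall Hszb.
pose P := seq.filter (fun h => bin h == c) R'.
have HP : (k <= size P)%N by rewrite size_filter; move: Hc2; rewrite count_map.
have HPR : forall h, h \in P -> h \in R' /\ bin h = c.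
  by move=> h; rewrite mem_filter => /andP[/eqP -> ->].
pose T := take k H.
pose T' := take r H ++ take (k - r) P.
have HszH : (k <= size H)%N by rewrite HsH leq_addr.
have HT1 : subseq T H by exact: take_subseq.
have HT2 : size T = k by rewrite size_takel.
have HT'1 : subseq T' H.
  rewrite -(cat_take_drop k H); apply: cat_subseq.
    rewrite -(take_takel _ (ltnW Hrk)); exact: take_subseq.
  apply: subseq_trans (take_subseq _ _) (filter_subseq _ _).
have HT'2 : size T' = k.
  rewrite size_cat size_takel; last exact: leq_trans (ltnW Hrk) HszH.
  rewrite size_takel; first by rewrite subnKC // ltnW.
  exact: leq_trans (leq_subr r k) HP.
have HnT : forall j, (j < k)%N -> nth 0%N T j = phi j by move=> j Hj; rewrite nth_take.
pose pj := fun j => nth 0%N P (j - r).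
have HnT' : forall j, (j < k)%N -> nth 0%N T' j = if (j < r)%N then phi j else pj j.
  move=> j Hj; rewrite nth_cat size_takel; last exact: leq_trans (ltnW Hrk) HszH.
  case: ifP => hjr; first by rewrite nth_take.
  rewrite nth_take //; clear -hjr Hj; lia.
have Hpj : forall j, (r <= j < k)%N -> pj j \in P.
  by move=> j /andP[h1 h2]; apply: mem_nth; clear -h1 h2 HP; lia.
pose x' := \sum_(j < k) d j *: b (nth 0%N T' j).
have Hsplit : x' = y + \sum_(r <= j < k) d j *: b (pj j).
  rewrite /x' -(big_mkord xpredT (fun j => d j *: b (nth 0%N T' j))).
  rewrite (big_cat_nat (leq0n r) (ltnW Hrk)) /=; congr (_ + _).
    rewrite /y -(big_mkord xpredT (fun j => d j *: b (phi j))).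
    apply: eq_big_nat => j /andP[_ hj]; rewrite HnT' ?hj //.
    exact: ltn_trans hj Hrk.
  apply: eq_big_nat => j /andP[hj1 hj2]; rewrite HnT' // ltnNge hj1 //.
pose gv := fun i : nat => - (2 * lam) + i%:R * et.
pose z : {ffun 'I_k -> 'I_(Num.truncn (4 * lam / et)).+1} :=
  [ffun j : 'I_k => inord (Num.truncn ((d j + 2 * lam) / et))].
have Hz : forall j : 'I_k, 0 <= d j - gv (z j) <= et.
  move=> j; rewrite /gv ffunE.
  have hd := Hd j (ltn_ord j); move: hd; rewrite ler_norml => /andP[hd1 hd2].
  have hq : 0 <= (d j + 2 * lam) / et by apply: divr_ge0; lra.
  rewrite inordK; last first.
    rewrite ltnS; apply: le_truncn; apply: ler_wpM2r; first by rewrite invr_ge0 ltW.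
    lra.
  have /andP[t1 t2] := truncn_itv hq.
  move: t1 t2; set t := Num.truncn _ => t1 t2.
  have et1 : (t.+1)%:R = t%:R + 1 :> R by rewrite natr1.
  rewrite et1 in t2.
  have e : (d j + 2 * lam) / et * et = d j + 2 * lam by rewrite divfK ?gt_eqF.
  have t1' := ler_wpM2r (ltW et0) t1.
  have t2' : (d j + 2 * lam) / et * et < (t%:R + 1) * et by rewrite ltr_pM2r.
  rewrite e mulrDl mul1r in t2'.
  rewrite e in t1'.
  apply/andP; split; lra.
have tri : forall a b0 : X, `|a| <= `|b0| + `|a - b0|.
  move=> a b0; rewrite -{1}(subrK b0 a); apply: le_trans (ler_normD _ _) _.
  by rewrite addrC.
have Happ : forall T0, subseq T0 H -> size T0 = k ->
  `|\sum_(j < k) d j *: b (nth 0%N T0 j) - \sum_(j < k) gv (z j) *: b (nth 0%N T0 j)|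
    <= k%:R * (et * lam).
  move=> T0 hs hz; rewrite -sumrB.
  have -> : k%:R * (et * lam) = \sum_(j < k) (et * lam).
    by rewrite sumr_const card_ord mulr_natl.
  apply: le_trans (ler_norm_sum _ _ _) _.
  apply: ler_sum => j _; rewrite -scalerBl normrZ; apply: ler_pM => //.
  - by have /andP[h1 h2] := Hz j; rewrite ger0_norm.
  - apply: Hb; apply: Hmem; apply: (mem_subseq hs); apply: mem_nth; rewrite hz.
    exact: ltn_ord.
have dn0 : 0 < dn by rewrite Hdn; apply: divr_gt0.
have Hx'b : `|x'| <= 1 + dn + 2 * (k%:R * (et * lam)).
  have a1 := Happ T' HT'1 HT'2.
  have a2 := Happ T HT1 HT2.
  have hh := Hhom z T T' HT1 HT2 HT'1 HT'2.
  have hc := truncn_close dn0 (normr_ge0 _) (normr_ge0 _) hh.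
  have b1 := tri x' (\sum_(j < k) gv (z j) *: b (nth 0%N T' j)).
  have b2 := tri (\sum_(j < k) gv (z j) *: b (nth 0%N T j)) (\sum_(j < k) d j *: b (nth 0%N T j)).
  rewrite distrC in b2.
  have ex : \sum_(j < k) d j *: b (nth 0%N T j) = \sum_(j < k) d j *: b (nth 0%N H j).
    by apply: eq_bigr => j _; rewrite HnT.
  rewrite ex in b2 a2.
  move: hc; rewrite ltr_norml => /andP[c1 c2].
  rewrite /gv in b1 b2 a1 a2.
  rewrite /x' in b1 a1 *.
  lra.
have Hidx : forall j, (r <= j < k)%N -> (index (pj j) R' < M)%N.
  by move=> j hj; rewrite -HsR index_mem; exact: (HPR _ (Hpj _ hj)).1.
pose a := fun i : nat => (if i == 0%N then 1 else 0) +
   \sum_(r <= j < k) (if i == (index (pj j) R').+1 then d j else 0).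
have HA : \sum_(i < M.+1) a i *: v i = x'.
  rewrite Hsplit.
  rewrite (eq_bigr (fun i : 'I_M.+1 => (if (i:nat) == 0%N then 1 else 0) *: v i +
     \sum_(r <= j < k) (if (i:nat) == (index (pj j) R').+1 then d j else 0) *: v i)); last first.
    by move=> i _; rewrite /a scalerDl scaler_suml.
  rewrite big_split /= sum_pick_scale // scale1r /=.
  congr (_ + _).
  rewrite exchange_big /=.
  apply: eq_big_nat => j hj; rewrite sum_pick_scale; last by rewrite ltnS Hidx.
  rewrite /= nth_index //; exact: (HPR _ (Hpj _ hj)).1.
have HAg : \sum_(i < M.+1) a i * g i = g 0%N + \sum_(r <= j < k) d j * val (pj j).
  rewrite (eq_bigr (fun i : 'I_M.+1 => (if (i:nat) == 0%N then 1 else 0) * g i +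
     \sum_(r <= j < k) (if (i:nat) == (index (pj j) R').+1 then d j else 0) * g i)); last first.
    by move=> i _; rewrite /a mulrDl mulr_suml.
  rewrite big_split /= sum_pick_mul // mul1r.
  congr (_ + _).
  rewrite exchange_big /=.
  apply: eq_big_nat => j hj; rewrite sum_pick_mul //; last by rewrite ltnS Hidx.
have Hy : `|y| <= `|x'| - \sum_(r <= j < k) d j * val (pj j).
  have := Hg a; rewrite HA HAg g0 /=; lra.
have HpjR : forall j, (r <= j < k)%N -> pj j \in R' by move=> j hj; exact: (HPR _ (Hpj _ hj)).1.
have hr : (r <= r < k)%N by rewrite leqnn Hrk.
pose L := val (pj r).
have e1 : \sum_(r <= j < k) d j * val (pj j) =
    L * \sum_(r <= j < k) d j + \sum_(r <= j < k) d j * (val (pj j) - L).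
  rewrite mulr_sumr -big_split /=; apply: eq_bigr => j _; rewrite /L; ring.
have hL : `|L * \sum_(r <= j < k) d j| <= lam * lam.
  rewrite normrM; apply: ler_pM => //; [exact: Hval (HpjR _ hr) | exact: Htail].
have hE : `|\sum_(r <= j < k) d j * (val (pj j) - L)| <= k%:R * (2 * lam * et).
  apply: le_trans (ler_norm_sum _ _ _) _.
  apply: le_trans (ler_sum_nat (G := fun=> 2 * lam * et) _) _.
    move=> j hj; rewrite normrM; apply: ler_pM => //.
      by apply: Hd; case/andP: hj.
    have hb : bin (pj j) = bin (pj r) by rewrite (HPR _ (Hpj _ hj)).2 (HPR _ (Hpj _ hr)).2.
    have hvj := Hval _ (HpjR _ hj); have hvr := Hval _ (HpjR _ hr).
    move: hvj hvr; rewrite !ler_norml => /andP[u1 u2] /andP[w1 w2].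
    have hu : 0 <= val (pj j) + lam by lra.
    have hv : 0 <= val (pj r) + lam by lra.
    have h := truncn_close et0 hu hv hb.
    rewrite (_ : val (pj j) + lam - (val (pj r) + lam) = val (pj j) - L) in h; last by rewrite /L; ring.
    by move: h; rewrite ltr_norml => /andP[h1 h2]; apply/andP; split; lra.
  rewrite /= sumr_const_nat.
  have -> : (2 * lam * et) *+ (k - r) = (k - r)%:R * (2 * lam * et) by rewrite (mulr_natl (2 * lam * et) (k - r)).
  apply: ler_wpM2r.
    by apply: mulr_ge0; [apply: mulr_ge0; lra | exact: ltW].
  by rewrite ler_nat leq_subr.
have q1 : k%:R * (et * lam) = eps / 4.
  by rewrite Het; field; apply/andP; split; rewrite gt_eqF.
have q2 : k%:R * (2 * lam * et) = eps / 2.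
  by rewrite Het; field; apply/andP; split; rewrite gt_eqF.
have hS := ler_normD (L * \sum_(r <= j < k) d j) (\sum_(r <= j < k) d j * (val (pj j) - L)).
rewrite -e1 in hS.
have hS2 := ler_norm (\sum_(r <= j < k) d j * val (pj j)).
change (`|y| <= lam ^+ 2 + 1 + 2 * eps).
rewrite expr2.
rewrite q1 Hdn in Hx'b; rewrite q2 in hE.
have : - (\sum_(r <= j < k) d j * val (pj j)) <= `|\sum_(r <= j < k) d j * val (pj j)|.
  by rewrite -normrN ler_norm.
lra.
Qed.

Unset Implicit Arguments.
Local Close Scope classical_set_scope.
Local Open Scope ring_scope.

Theorem proposition18 (R : realType) (lam eps : R) (k : nat) :
  1 <= lam -> 0 < eps -> (0 < k)%N ->
  exists n : nat,
    forall (X : completeNormedModType R) (m : nat) (b : nat -> X),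
      (n <= m)%N -> triangular lam m b ->
      exists phi : nat -> nat,
        subseq_index k m phi /\
        wide_s ((lam ^+ 2 + 1) / 2 + eps) k (fun i => b (phi i)).
Proof.
move=> Hl He Hk.
have lam0 : 0 < lam by apply: lt_le_trans Hl.
have k0 : 0 < k%:R :> R by rewrite ltr0n.
pose et := eps / (4 * k%:R * lam).
have et0 : 0 < et by rewrite /et; apply: divr_gt0 => //; apply: mulr_gt0 => //; apply: mulr_gt0.
pose dn := eps / 2.
have dn0 : 0 < dn by rewrite /dn; apply: divr_gt0.
pose G0 := Num.truncn (4 * lam / et).
pose Cb0 := Num.truncn (2 * lam / et).
pose M := (Cb0.+1 * k)%N.
pose Nb := k%:R * ((2 * lam + (G0.+1)%:R * et) * lam).
pose Bn := Num.truncn (Nb / dn).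
pose Ctype := {ffun {ffun 'I_k -> 'I_G0.+1} -> 'I_Bn.+1}.
have [N HN] := ramsey k #|{: Ctype}| (k + M).
exists N => X m b Hnm [f [H1 [H0 [Hf Hb]]]].
pose nrm := fun (z : {ffun 'I_k -> 'I_G0.+1}) (T : seq nat) =>
  `|\sum_(j < k) (- (2 * lam) + (z j)%:R * et) *: b (nth 0%N T j)|.
pose cf := fun T : seq nat => ([ffun z => inord (Num.truncn (nrm z T / dn))] : Ctype).
pose chi := fun T => (enum_rank (cf T) : nat).
have Hchi : forall T, (chi T < #|{: Ctype}|)%N by move=> T; exact: ltn_ord.
have Hsz : (N <= size (iota 0 m))%N by rewrite size_iota.
have [H [HHs [HHz [c0 [_ Hhom]]]]] := HN chi Hchi (iota 0 m) Hsz.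
have Hmem : forall h, h \in H -> (h < m)%N.
  by move=> h Hh; have := mem_subseq HHs Hh; rewrite mem_iota.
have Hnb : forall z T, subseq T H -> size T = k -> nrm z T <= Nb.
  move=> z T hs hz; rewrite /nrm /Nb.
  have -> : k%:R * ((2 * lam + (G0.+1)%:R * et) * lam) =
            \sum_(j < k) ((2 * lam + (G0.+1)%:R * et) * lam).
    by rewrite sumr_const card_ord mulr_natl.
  apply: le_trans (ler_norm_sum _ _ _) _.
  apply: ler_sum => j _; rewrite normrZ; apply: ler_pM => //.
  - apply: le_trans (ler_normD _ _) _; rewrite normrN.
    rewrite ger0_norm; last by apply: mulr_ge0; lra.
    rewrite ger0_norm; last by apply: mulr_ge0 => //; exact: ltW.
    apply: lerD => //; apply: ler_wpM2r; first exact: ltW.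
    by rewrite ler_nat ltnW.
  - apply: Hb; apply: Hmem; apply: (mem_subseq hs); apply: mem_nth; rewrite hz.
    exact: ltn_ord.
have Hhom' : forall (z : {ffun 'I_k -> 'I_G0.+1}) T T',
     subseq T H -> size T = k -> subseq T' H -> size T' = k ->
     Num.truncn (nrm z T / dn) = Num.truncn (nrm z T' / dn).
  move=> z T T' h1 h2 h3 h4.
  have e : cf T = cf T'.
    apply: enum_rank_inj; apply: val_inj.
    by rewrite /= -/(chi T) -/(chi T') (Hhom _ h1 h2) (Hhom _ h3 h4).
  have := congr1 (fun F : Ctype => (F z : nat)) e; rewrite /cf /= !ffunE.
  have t1 : (Num.truncn (nrm z T / dn) <= Bn)%N.
    by apply: le_truncn; apply: ler_wpM2r; [rewrite invr_ge0 ltW | exact: Hnb].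
  have t2 : (Num.truncn (nrm z T' / dn) <= Bn)%N.
    by apply: le_truncn; apply: ler_wpM2r; [rewrite invr_ge0 ltW | exact: Hnb].
  by rewrite !inordK.
have Hsort : sorted ltn H := subseq_sorted ltn_trans HHs (iota_ltn_sorted 0 m).
pose phi := fun j => nth 0%N H j.
have Hphim : forall j, (j < k)%N -> (phi j < m)%N.
  by move=> j Hj; apply: Hmem; apply: mem_nth; rewrite HHz; clear -Hj; lia.
have Hinc : forall i j, (i < j)%N -> (j < k)%N -> (phi i < phi j)%N.
  move=> i j hij hj; apply: (sorted_ltn_nth ltn_trans 0%N Hsort) => //; rewrite inE HHz; clear -hij hj; lia.
have Hcore := core Hl He Hk (erefl et) (erefl dn) H1 H0 Hf Hb HHs HHz Hhom'.
have lamle : lam <= (lam ^+ 2 + 1) / 2 + eps.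
  have : 0 <= (lam - 1) ^+ 2 by apply: exprn_ge0; lra.
  rewrite sqrrB expr1n => h.
  have : lam <= (lam ^+ 2 + 1) / 2.
    rewrite ler_pdivlMr //; lra.
  lra.
exists phi; split; first by split.
split; [|split].
- move=> k' c Hk'.
  pose xx := \sum_(j < k) c j *: b (phi j).
  pose yy := \sum_(j < k') c j *: b (phi j).
  have sc : forall (s : R) n, \sum_(j < n) (s * c j) *: b (phi j) = s *: \sum_(j < n) c j *: b (phi j).
    by move=> s n; rewrite scaler_sumr; apply: eq_bigr => j _; rewrite scalerA.
  have HK : forall s : R, 0 <= s -> s * `|xx| <= 1 ->
      s * `|yy| <= lam ^+ 2 + 1 + 2 * eps.
    move=> s hs hsx; have := Hcore (fun j => s * c j) k' Hk'.
    by rewrite !sc !normrZ (ger0_norm hs); apply.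
  have -> : 2 * ((lam ^+ 2 + 1) / 2 + eps) = lam ^+ 2 + 1 + 2 * eps by field.
  change (`|yy| <= (lam ^+ 2 + 1 + 2 * eps) * `|xx|).
  have hK : 0 < lam ^+ 2 + 1 + 2 * eps.
    have : 0 <= lam ^+ 2 by apply: exprn_ge0; exact: ltW.
    lra.
  have := normr_ge0 xx; rewrite le_eqVlt => /orP[/eqP h0 | hpos].
    rewrite -h0 mulr0.
    have := normr_ge0 yy; rewrite le_eqVlt => /orP[/eqP h1 | hy]; first by rewrite -h1.
    have := HK ((lam ^+ 2 + 1 + 2 * eps + 1) / `|yy|).
    rewrite -h0 mulr0 divfK ?gt_eqF //.
    have : 0 <= (lam ^+ 2 + 1 + 2 * eps + 1) / `|yy| by apply: divr_ge0; [lra | exact: ltW].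
    move=> h2 h3; have := h3 h2 ler01; lra.
  have := HK (`|xx|^-1); rewrite mulVf ?gt_eqF // => h.
  have hi : 0 < `|xx|^-1 by rewrite invr_gt0.
  have h' := h (ltW hi) (lexx 1).
  rewrite -(ler_pM2l hpos) mulrA mulfV ?gt_eqF // mul1r in h'.
  by rewrite mulrC.
- move=> j hj; apply: le_trans lamle; apply: Hb; exact: Hphim.
- move=> k' n' c hk hn.
  rewrite leq_eqVlt in hk; case/orP: hk => [/eqP -> | hk].
    rewrite big_geq // normr0; apply: mulr_ge0 => //.
    have : 0 <= lam ^+ 2 by apply: exprn_ge0; exact: ltW.
    lra.
  have Hphim' : forall i, (i < n')%N -> (phi i < m)%N.
    by move=> i hi; apply: Hphim; exact: leq_trans hi hn.
  have Hinc' : forall i j, (i < j)%N -> (j < n')%N -> (phi i < phi j)%N.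
    by move=> i j hij hj; apply: Hinc => //; exact: leq_trans hj hn.
  rewrite -(tail_sum c H1 H0 Hf Hphim' Hinc' hk).
  apply: le_trans (proj2 (Hf _ (Hphim' _ hk)) _) _.
  by apply: ler_wpM2r.
Qed.
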